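(* Let $C\in\mathbb{R}^{n\times m}$ with $n\ge 2$ be such that the DSR graph $G_{C,C^t}$ is acyclic (has no cycles). Then for every $A\in\mathcal{Q}_0(C)$ and every $B\in\mathcal{Q}_0(C^t)$, both $AB$ and $(AB)^{[2]}$ are $P_0$-matrices, and $AB$ is positive semistable.
   Context: For $M\in\mathbb{R}^{n\times m}$, $\mathcal{Q}(M)$ is the set of matrices with the same entrywise sign pattern as $M$, and $\mathcal{Q}_0(M)$ its closure. A square real matrix is a $P_0$-matrix if all principal minors are nonnegative; positive semistable if all eigenvalues have nonnegative real part. $M^{[2]}$ denotes the second additive compound of a square matrix $M$: the matrix of $u\wedge v\mapsto Mu\wedge v+u\wedge Mv$ on $\Lambda^2\mathbb{R}^n$ in the lexicographically ordered basis $e_i\wedge e_j$, $i<j$. DSR graph: for $A\in\mathbb{R}^{n\times m}$, $B\in\mathbb{R}^{m\times n}$, $G_{A,B}$ is the signed bipartite digraph with S-vertices $S_1,\dots,S_n$, R-vertices $R_1,\dots,R_m$, an arc $R_j\to S_i$ of sign $\mathrm{sign}(A_{ij})$ iff $A_{ij}\ne0$ and an arc $S_i\to R_j$ of sign $\mathrm{sign}(B_{ji})$ iff $B_{ji}\ne 0$, where antiparallel arcs of the same sign are merged into a single undirected edge. A cycle is a nonempty closed walk (traversing edges consistently with orientation) that repeats no vertex except first$=$last; a cycle of length 2 occurs only when two distinct (non-merged) arcs join the same pair of vertices. For $G_{C,C^t}$ all edges are undirected, so acyclicity means the underlying simple graph is a forest. *)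

(* Defs.v *)
From HB Require Import structures.
From mathcomp Require Import all_boot all_order all_algebra.
From mathcomp Require Import complex.
Set Implicit Arguments.
Unset Strict Implicit.
Unset Printing Implicit Defensive.
Import Order.TTheory GRing.Theory Num.Theory.
Local Open Scope ring_scope.

Definition in_Q0 (R : realDomainType) (p q : nat) (M A : 'M[R]_(p, q)) : Prop :=
  forall i j, Num.sg (A i j) = 0 \/ Num.sg (A i j) = Num.sg (M i j).

Definition principal_submx (R : pzRingType) (k : nat) (M : 'M[R]_k) (S : {set 'I_k})
  : 'M[R]_#|S| :=
  \matrix_(a, b) M (@enum_val _ (mem S) a) (@enum_val _ (mem S) b).

Definition P0_matrix (R : realDomainType) (k : nat) (M : 'M[R]_k) : Prop :=
  forall S : {set 'I_k}, 0 <= \det (principal_submx M S).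

Definition positive_semistable (R : rcfType) (k : nat) (M : 'M[R]_k) : Prop :=
  forall z : R[i], root (map_poly (real_complex R) (char_poly M)) z ->
    0 <= complex.Re z.

(* Index set of the basis e_i /\ e_j, i < j, of Lambda^2 R^n; the
   enumeration of a finite predicate on 'I_n * 'I_n is lexicographic. *)
Definition wedge_idx (n : nat) : pred ('I_n * 'I_n) := fun p => (p.1 < p.2)%N.
Arguments wedge_idx n : clear implicits.

(* Second additive compound: matrix of u/\v |-> Mu/\v + u/\Mv in the basis
   (e_i /\ e_j)_{i<j} ordered lexicographically.  Expanding
   M^[2](e_k/\e_l) = sum_p M_pk e_p/\e_l + sum_p M_pl e_k/\e_p,
   the coefficient on e_i/\e_j is
   [l=j] M_ik - [l=i] M_jk + [k=i] M_jl - [k=j] M_il. *)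
Definition compound2 (R : pzRingType) (n : nat) (M : 'M[R]_n)
  : 'M[R]_#|wedge_idx n| :=
  \matrix_(a, b)
    let i := (@enum_val _ (wedge_idx n) a).1 in
    let j := (@enum_val _ (wedge_idx n) a).2 in
    let k := (@enum_val _ (wedge_idx n) b).1 in
    let l := (@enum_val _ (wedge_idx n) b).2 in
    (l == j)%:R * M i k - (l == i)%:R * M j k
    + (k == i)%:R * M j l - (k == j)%:R * M i l.

(* Vertices S_1..S_n, R_1..R_m; arc R_j -> S_i iff A_ij != 0 (sign sg A_ij),
   arc S_i -> R_j iff B_ji != 0 (sign sg B_ji); antiparallel arcs of equal
   sign are merged into one undirected edge (traversable both ways).
   The graph is bipartite, so a cycle alternates S and R vertices.
   - a cycle of length 2 S_i -> R_j -> S_i uses two distinct arcs, i.e.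
     both arcs exist and are NOT merged (different signs);
   - a cycle of length 2(k+2) >= 4 is
     S_{s0} -> R_{r0} -> S_{s1} -> R_{r1} -> ... -> R_{r(k+1)} -> S_{s0}
     with all S- and R-vertices distinct (an undirected edge can be
     traversed in either direction, so only the existence of the needed
     arc matters). *)
Definition dsr_has_cycle (R : realDomainType) (n m : nat)
  (A : 'M[R]_(n, m)) (B : 'M[R]_(m, n)) : Prop :=
  (exists (i : 'I_n) (j : 'I_m),
      [/\ A i j != 0, B j i != 0 & Num.sg (A i j) != Num.sg (B j i)])
  \/
  (exists (k : nat) (s : 'I_k.+2 -> 'I_n) (r : 'I_k.+2 -> 'I_m),
      [/\ injective s, injective r &
          forall t : 'I_k.+2, B (r t) (s t) != 0 /\ A (s (ordS t)) (r t) != 0]).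

Definition dsr_acyclic (R : realDomainType) (n m : nat)
  (A : 'M[R]_(n, m)) (B : 'M[R]_(m, n)) : Prop := ~ dsr_has_cycle A B.

(* Main.v *)
Require Import Defs.
From HB Require Import structures.
From mathcomp Require Import all_boot all_order all_algebra.
From mathcomp Require Import complex.
From mathcomp Require Import fingroup perm zify ring lra.
Import Order.TTheory GRing.Theory Num.Theory.
Local Open Scope ring_scope.

Module Aux.
Set Implicit Arguments.
Unset Strict Implicit.
Unset Printing Implicit Defensive.


Lemma det_mulmx_gen (R : comNzRingType) k N (U : 'M[R]_(k,N)) (V : 'M[R]_(N,k)) :
 \det (U *m V) = \sum_(f : {ffun 'I_k -> 'I_N})
     (\prod_i U i (f i)) * \det (\matrix_(i,j) V (f i) j).
Proof.
rewrite /(\det _).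
under eq_bigr => s _.
  under eq_bigr => i _ do rewrite mxE.
  rewrite bigA_distr_bigA big_distrr /=.
over.
rewrite exchange_big /=; apply: eq_bigr => f _.
rewrite big_distrr /=; apply: eq_bigr => s _.
rewrite mulrCA big_split /=; congr (_ * (_ * _)).
by apply: eq_bigr => i _; rewrite mxE.
Qed.

Lemma det_gram (R : realFieldType) k N (U : 'M[R]_(k,N)) : 0 <= \det (U *m U^T).
Proof.
pose Mf (f : {ffun 'I_k -> 'I_N}) := \matrix_(i, j) U i (f j).
have E0 : \det (U *m U^T) = \sum_(f : {ffun 'I_k -> 'I_N}) (\prod_i U i (f i)) * \det (Mf f).
  rewrite det_mulmx_gen; apply: eq_bigr => f _; congr (_ * _).
  rewrite -det_tr; congr (\det _); apply/matrixP => i j; by rewrite !mxE.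
have E1 : forall s : 'S_k, \det (U *m U^T) =
    \sum_(f : {ffun 'I_k -> 'I_N}) (-1) ^+ s * (\prod_i U i (f (s i))) * \det (Mf f).
  move=> s; rewrite E0.
  pose g (f : {ffun 'I_k -> 'I_N}) : {ffun 'I_k -> 'I_N} := [ffun i => f (s i)].
  pose g' (f : {ffun 'I_k -> 'I_N}) : {ffun 'I_k -> 'I_N} := [ffun i => f (s^-1 i)%g].
  rewrite (reindex g); last first.
    exists g' => f _; apply/ffunP => i; rewrite !ffunE ?permKV ?permK //.
  apply: eq_bigr => f _.
  have -> : Mf (g f) = col_perm s (Mf f).
    by apply/matrixP => i j; rewrite !mxE ffunE.
  rewrite col_permE det_mulmx det_perm odd_permV.
  rewrite [X in X * _ = _](_ : _ = \prod_i U i (f (s i))); last first.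
    by apply: eq_bigr => i _; rewrite ffunE.
  by rewrite [\det (Mf f) * _]mulrC mulrCA mulrA.
have E2 : (k`!)%:R * \det (U *m U^T) = \sum_(f : {ffun 'I_k -> 'I_N}) \det (Mf f) ^+ 2.
  have -> : (k`!)%:R * \det (U *m U^T) = \sum_(s : {perm 'I_k}) \det (U *m U^T).
    by rewrite sumr_const card_Sn mulr_natl.
  rewrite (eq_bigr _ (fun s _ => E1 s)) exchange_big /=.
  apply: eq_bigr => f _; rewrite -big_distrl /= mulrC expr2; congr (_ * _).
  rewrite /(\det (Mf f)); apply: eq_bigr => s _; congr (_ * _).
  by apply: eq_bigr => i _; rewrite mxE.
have H : 0 <= (k`!)%:R * \det (U *m U^T) :> R.
  by rewrite E2; apply: sumr_ge0 => f _; apply: sqr_ge0.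
by rewrite pmulr_rge0 // in H; rewrite ltr0n fact_gt0.
Qed.

Lemma det_diag_sim (R : comUnitRingType) k (M G : 'M[R]_k) (d : 'I_k -> R) :
  (forall i, d i \is a GRing.unit) -> (forall i j, M i j = d i * G i j / d j) ->
  \det M = \det G.
Proof.
move=> du HM.
have -> : M = diag_mx (\row_i d i) *m G *m diag_mx (\row_i (d i)^-1).
  apply/matrixP => i j; rewrite mul_mx_diag mul_diag_mx !mxE HM //.
rewrite !det_mulmx !det_diag mulrAC -big_split /= big1 ?mul1r // => i _.
by rewrite !mxE mulrV.
Qed.


Lemma principal_submx_mul (R : comNzRingType) k N (U : 'M[R]_(k,N)) (V : 'M[R]_(N,k)) S :
  principal_submx (U *m V) S =
  (\matrix_(a, c) U (@enum_val _ (mem S) a) c) *m (\matrix_(c, b) V c (@enum_val _ (mem S) b)).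
Proof.
apply/matrixP => a b; rewrite !mxE; apply: eq_bigr => c _; by rewrite !mxE.
Qed.

Lemma principal_submx_map (R S' : comNzRingType) (f : {rmorphism R -> S'}) k (M : 'M[R]_k) S :
  principal_submx (map_mx f M) S = map_mx f (principal_submx M S).
Proof. by apply/matrixP => a b; rewrite !mxE. Qed.

Lemma compound2_map (R S' : comNzRingType) (f : {rmorphism R -> S'}) k (M : 'M[R]_k) :
  compound2 (map_mx f M) = map_mx f (compound2 M).
Proof.
apply/matrixP => a b; rewrite !mxE /=.
by rewrite !mxE !(rmorphB, rmorphD, rmorphM, rmorph_nat).
Qed.

Lemma gram_P0 (R : realFieldType) k N (U : 'M[R]_(k,N)) : P0_matrix (U *m U^T).
Proof.
move=> S; rewrite principal_submx_mul.
set W := \matrix_(a, c) U _ c.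
have -> : (\matrix_(c, b) U^T c (@enum_val _ (mem S) b)) = W^T.
  by apply/matrixP => c b; rewrite !mxE.
exact: det_gram.
Qed.

Lemma addr_4 (R : comNzRingType) (A B C D : R) : A - B + C - D = A - D - (B - C).
Proof. ring. Qed.

Lemma sum_delta (R : comNzRingType) k (j : 'I_k) (F : 'I_k -> R) :
  \sum_(l < k) (l == j)%:R * F l = F j.
Proof.
rewrite (bigD1 j) //= eqxx mul1r big1 ?addr0 // => l /negbTE ->; by rewrite mul0r.
Qed.

Lemma sum_delta' (R : comNzRingType) k (j : 'I_k) (F : 'I_k -> R) :
  \sum_(l < k) (j == l)%:R * F l = F j.
Proof. by under eq_bigr => l _ do rewrite eq_sym; apply: sum_delta. Qed.

Definition Pmat (R : pzRingType) n m (X : 'M[R]_(n, m)) :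
  'M[R]_(#|wedge_idx n|, #|{: 'I_m * 'I_n}|) :=
  \matrix_(a, c)
    let i := (@enum_val _ (wedge_idx n) a).1 in
    let j := (@enum_val _ (wedge_idx n) a).2 in
    let q := (@enum_val _ (mem {: 'I_m * 'I_n}) c).1 in
    let l := (@enum_val _ (mem {: 'I_m * 'I_n}) c).2 in
    (l == j)%:R * X i q - (l == i)%:R * X j q.

Lemma compound2_gram (R : comNzRingType) n m (X : 'M[R]_(n, m)) :
  compound2 (X *m X^T) = Pmat X *m (Pmat X)^T.
Proof.
apply/matrixP => a b; rewrite !mxE.
set i := (enum_val a).1; set j := (enum_val a).2.
set k := (enum_val b).1; set l := (enum_val b).2.
pose F (x : 'I_m * 'I_n) := ((x.2 == j)%:R * X i x.1 - (x.2 == i)%:R * X j x.1) *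
   ((x.2 == l)%:R * X k x.1 - (x.2 == k)%:R * X l x.1).
transitivity (\sum_(x : 'I_m * 'I_n) F x); last first.
  rewrite (reindex (@enum_val _ (mem {: 'I_m * 'I_n}))) /=; last first.
    exists (@enum_rank _) => x _; [exact: enum_valK | exact: enum_rankK].
  by apply: eq_bigr => c _; rewrite !mxE.
rewrite (eq_bigr (fun x => F (x.1, x.2))); last by case.
rewrite -(pair_big xpredT xpredT (fun q t => F (q, t))) /=.
have D : forall (u v : 'I_n) (A B : R),
    \sum_(t < n) ((t == u)%:R * A) * ((t == v)%:R * B) = (u == v)%:R * (A * B).
  move=> u v A B; under eq_bigr => t _ do rewrite -mulrA.
  by rewrite (sum_delta u (fun t => A * ((t == v)%:R * B))) mulrCA.
under eq_bigr => q _.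
  rewrite /F /=.
  under eq_bigr => t _ do rewrite mulrBl !mulrBr.
  rewrite !(big_split, sumrN) /= !D.
over.
rewrite /= !(big_split, sumrN) /= -!big_distrr /=.
have XX : forall u v, (X *m X^T) u v = \sum_(q < m) X u q * X v q.
  by move=> u v; rewrite !mxE; apply: eq_bigr => q _; rewrite mxE.
rewrite !XX [l == j]eq_sym [l == i]eq_sym [k == i]eq_sym [k == j]eq_sym.
exact: addr_4.
Qed.

Lemma compound2_diag_sim (R : fieldType) n (M G : 'M[R]_n) (d : 'I_n -> R) :
  (forall i, d i != 0) -> (forall i k, M i k = d i * G i k / d k) ->
  forall a b, compound2 M a b =
    (d (@enum_val _ (wedge_idx n) a).1 * d (@enum_val _ (wedge_idx n) a).2)
    * compound2 G a b /
    (d (@enum_val _ (wedge_idx n) b).1 * d (@enum_val _ (wedge_idx n) b).2).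
Proof.
move=> dn0 HM a b; rewrite !mxE /= !HM.
move: (enum_val a) (enum_val b) => [i j] [k l] /=.
have H : forall (x y : 'I_n) (A B : R), (x = y -> A = B) -> (x == y)%:R * A = (x == y)%:R * B.
  move=> x y A B E; case: (x =P y) => [xy|_]; [by rewrite (E xy) | by rewrite !mul0r].
have dk := dn0 k; have dl := dn0 l; have di := dn0 i; have dj := dn0 j.
transitivity ((l == j)%:R * (d i * d j * G i k / (d k * d l))
  - (l == i)%:R * (d i * d j * G j k / (d k * d l))
  + (k == i)%:R * (d i * d j * G j l / (d k * d l))
  - (k == j)%:R * (d i * d j * G i l / (d k * d l))).
  congr (_ - _ + _ - _); apply: H => ->; field; by rewrite ?dk ?dl ?di ?dj.
field; by rewrite ?dk ?dl.
Qed.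

Lemma P0_diag_sim (R : realFieldType) k (M G : 'M[R]_k) (d : 'I_k -> R) :
  (forall i, d i != 0) -> (forall i j, M i j = d i * G i j / d j) ->
  P0_matrix G -> P0_matrix M.
Proof.
move=> dn0 HM PG S.
rewrite (@det_diag_sim _ _ _ (principal_submx G S) (fun a => d (@enum_val _ (mem S) a))).
- exact: PG.
- by move=> a; rewrite unitfE.
- by move=> a b; rewrite !mxE HM.
Qed.

Lemma simgram_P0 (R : realFieldType) n m (M : 'M[R]_n) (X : 'M[R]_(n,m)) (d : 'I_n -> R) :
  (forall i, d i != 0) -> (forall i k, M i k = d i * (X *m X^T) i k / d k) ->
  P0_matrix M /\ P0_matrix (compound2 M).
Proof.
move=> dn0 HM; split.
  by apply: (P0_diag_sim dn0 HM); apply: gram_P0.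
apply: (P0_diag_sim _ (compound2_diag_sim dn0 HM)).
  by move=> a; rewrite mulf_neq0.
rewrite compound2_gram; exact: gram_P0.
Qed.


Lemma root_char_det (F : fieldType) n (A : 'M[F]_n) a :
  (\det (a%:M - A) == 0) = root (char_poly A) a.
Proof.
congr (_ == 0); rewrite horner_sum; apply: eq_bigr => s _.
rewrite hornerM horner_exp !hornerE; congr (_ * _).
rewrite (big_morph _ (fun p q => hornerM p q a) (hornerC 1 a)).
by apply: eq_bigr => i _; rewrite !mxE !(hornerE, hornerMn).
Qed.

Lemma gram_eig_nonneg (R : rcfType) n m (X : 'M[R]_(n,m)) (z : R[i]) :
  \det (z%:M - map_mx (real_complex R) (X *m X^T)) = 0 -> 0 <= z.
Proof.
set Xc := map_mx (real_complex R) X.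
rewrite map_mxM -map_trmx -/Xc => /eqP /det0P [v vn0 Hv].
have Hv' : v *m (Xc *m Xc^T) = z *: v.
  by apply/eqP; rewrite eq_sym -subr_eq0 -mul_mx_scalar -mulmxBr Hv.
pose vc := map_mx (@conjc R) v.
pose w := v *m Xc.
have XcJ : map_mx (@conjc R) Xc = Xc.
  by apply/matrixP => i j; rewrite !mxE conjc_real.
have E1 : (v *m (Xc *m Xc^T) *m vc^T) 0 0 = z * \sum_i v 0 i * conjc (v 0 i).
  rewrite Hv' -scalemxAl mxE; congr (_ * _); rewrite mxE; apply: eq_bigr => i _; by rewrite !mxE.
have E2 : (v *m (Xc *m Xc^T) *m vc^T) 0 0 = \sum_q w 0 q * conjc (w 0 q).
  have -> : v *m (Xc *m Xc^T) *m vc^T = w *m (map_mx (@conjc R) w)^T.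
    by rewrite /w map_mxM XcJ trmx_mul !mulmxA.
  by rewrite mxE; apply: eq_bigr => q _; rewrite !mxE.
have Nw : 0 <= \sum_q w 0 q * conjc (w 0 q).
  by apply: sumr_ge0 => q _; apply: mulcJ_ge0.
have Nv : 0 < \sum_i v 0 i * conjc (v 0 i).
  case: (pickP (fun i => v 0 i != 0)) => [i vi | H]; last first.
    by case/eqP: vn0; apply/rowP => i; move: (H i) => /negbFE /eqP ->; rewrite mxE.
  rewrite (bigD1 i) //=.
  apply: (@lt_le_trans _ _ (v 0 i * conjc (v 0 i))).
    by rewrite lt_def mulcJ_ge0 andbT mulf_neq0 // conjc_eq0.
  by rewrite lerDl; apply: sumr_ge0 => j _; apply: mulcJ_ge0.
have -> : z = (\sum_q w 0 q * conjc (w 0 q)) / \sum_i v 0 i * conjc (v 0 i).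
  by rewrite -E2 E1 mulfK // gt_eqF.
by rewrite divr_ge0 // ltW.
Qed.

Lemma simgram_semistable (R : rcfType) n m (M : 'M[R]_n) (X : 'M[R]_(n,m)) (d : 'I_n -> R) :
  (forall i, d i != 0) -> (forall i k, M i k = d i * (X *m X^T) i k / d k) ->
  positive_semistable M.
Proof.
move=> dn0 HM z; rewrite map_char_poly -root_char_det => /eqP H0.
have dcn0 : forall i, real_complex R (d i) != 0 :> R[i] by move=> i; rewrite fmorph_eq0.
have : \det (z%:M - map_mx (real_complex R) (X *m X^T)) = 0.
  rewrite -H0; move: (X *m X^T) HM => G HM.
  symmetry; apply: (@det_diag_sim _ _ _ _ (fun i => real_complex R (d i))).
    by move=> i; rewrite unitfE.
  move=> i k; rewrite !mxE HM.
  have := dcn0 i; have := dcn0 k.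
  case: (eqVneq i k) => [<-|ik]; rewrite ?mulr1n ?mulr0n ?sub0r !rmorphM fmorphV /=;
    move=> h1 h2; field; by rewrite ?h1 ?h2.
move/gram_eig_nonneg; rewrite lecE => /andP [_].
by case: z {H0}.
Qed.

Lemma horner_char (F : comNzRingType) n (A : 'M[F]_n) a :
  (char_poly A).[a] = \det (a%:M - A).
Proof.
rewrite /(\det _) horner_sum; apply: eq_bigr => s _.
rewrite hornerM horner_exp !hornerE; congr (_ * _).
rewrite (big_morph _ (fun p q => hornerM p q a) (hornerC 1 a)).
by apply: eq_bigr => i _; rewrite !mxE !(hornerE, hornerMn).
Qed.

Lemma norm_sub_lb (R : rcfType) (z r : R[i]) :
  complex.Re z < 0 -> 0 <= complex.Re r -> real_complex R (- complex.Re z) <= `|z - r|.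
Proof.
move=> zn rp; rewrite normc_def lecR.
have -> : complex.Re (z - r) = complex.Re z - complex.Re r by case: z {zn} => a b; case: r {rp}.
set x := complex.Re z - complex.Re r.
have hx : x <= complex.Re z by rewrite /x; lra.
rewrite -[X in X <= _](@ger0_norm _ (- complex.Re z)); last lra.
rewrite -sqrtr_sqr ler_sqrt; last by rewrite addr_ge0 ?sqr_ge0.
have : (- complex.Re z) ^+ 2 <= x ^+ 2 by nra.
have := sqr_ge0 (complex.Im (z - r)); lra.
Qed.

Lemma det_lower (R : rcfType) n (M : 'M[R]_n) (z : R[i]) :
  positive_semistable M -> complex.Re z < 0 ->
  real_complex R ((- complex.Re z) ^+ n) <= `|\det (z%:M - map_mx (real_complex R) M)|.
Proof.
move=> ps zn.
rewrite -horner_char -map_char_poly.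
set p := map_poly _ _.
have pm : p \is monic by rewrite map_monic char_poly_monic.
have [rs prs] := closed_field_poly_normal p.
have e : p = \prod_(r <- rs) ('X - r%:P) by rewrite {1}prs (monicP pm) scale1r.
have szrs : size rs = n.
  have := size_prod_XsubC rs (fun x => x).
  by rewrite -e size_map_poly size_char_poly => -[].
have rts : forall r, r \in rs -> 0 <= complex.Re r.
  move=> r rin; apply: ps; rewrite -/p e root_prod_XsubC //.
rewrite e horner_prod normr_prod.
rewrite -szrs rmorphXn /=.
elim: rs rts {prs szrs e} => [|r rs IH] rts.
  by rewrite big_nil.
rewrite big_cons /= exprS; apply: ler_pM.
- by rewrite ler0c; lra.
- by rewrite exprn_ge0 // ler0c; lra.
- by rewrite hornerXsubC; apply: norm_sub_lb => //; apply: rts; rewrite mem_head.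
- by apply: IH => r' r'in; apply: rts; rewrite in_cons r'in orbT.
Qed.


Definition no_cycle n m (E : 'I_n -> 'I_m -> bool) : Prop :=
  ~ exists k (s : 'I_k.+2 -> 'I_n) (r : 'I_k.+2 -> 'I_m),
      [/\ injective s, injective r &
          forall t : 'I_k.+2, E (s t) (r t) /\ E (s (ordS t)) (r t)].

Lemma mk_cycle n m (E : 'I_n -> 'I_m -> bool) k (s : nat -> 'I_n) (r : nat -> 'I_m) :
  (forall t1 t2, (t1 < k.+2)%N -> (t2 < k.+2)%N -> s t1 = s t2 -> t1 = t2) ->
  (forall t1 t2, (t1 < k.+2)%N -> (t2 < k.+2)%N -> r t1 = r t2 -> t1 = t2) ->
  (forall t, (t < k.+2)%N -> E (s t) (r t)) ->
  (forall t, (t < k.+1)%N -> E (s t.+1) (r t)) ->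
  E (s 0%N) (r k.+1) ->
  ~ no_cycle E.
Proof.
move=> Hs Hr H1 H2 H3; apply.
exists k, (fun t : 'I_k.+2 => s t), (fun t : 'I_k.+2 => r t); split.
- by move=> t1 t2 /= /Hs H; apply/val_inj/H.
- by move=> t1 t2 /= /Hr H; apply/val_inj/H.
move=> t; split; first exact: H1.
rewrite /ordS /=.
case: (ltnP t k.+1) => [lt|ge].
  by rewrite modn_small ?ltnS //; apply: H2.
have -> : nat_of_ord t = k.+1 by apply/anti_leq; rewrite ge -ltnS ltn_ord.
by rewrite modnn.
Qed.

Section Graph.
Variables (n m : nat) (E : 'I_n -> 'I_m -> bool).

Definition adj (F : {set 'I_n * 'I_m}) : rel ('I_n + 'I_m) := fun x y =>
  match x, y with
  | inl i, inr j => (i, j) \in F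
  | inr j, inl i => (i, j) \in F
  | _, _ => false
  end.

Lemma adj_sym F : symmetric (adj F).
Proof. by case=> [i|j] [i'|j']. Qed.

Definition isl (x : 'I_n + 'I_m) := if x is inl _ then true else false.

Lemma adj_isl F x y : adj F x y -> isl y = ~~ isl x.
Proof. by case: x => [i|j]; case: y => [i'|j']. Qed.

Lemma cycle_of_connect (F : {set 'I_n * 'I_m}) u v :
  (forall i j, (i, j) \in F -> E i j) -> E u v -> (u, v) \notin F ->
  connect (adj F) (inl u) (inr v) -> ~ no_cycle E.
Proof.
move=> FE Euv uvF /connectP [p0 pth0 lst0].
move: lst0; case: (shortenP pth0) => p pth uq _ lst.
pose x0 : 'I_n + 'I_m := inl u.
pose c := inl u :: p.
have alt : forall t, (t < size c)%N -> isl (nth x0 c t) = ~~ odd t.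
  elim=> [|t IH] //= ltc.
  have ltp : (t < size p)%N by [].
  move/pathP: pth => /(_ x0 t ltp) /adj_isl.
  rewrite -/c => ->; rewrite IH // ?(ltn_trans (ltnSn t)) //.
set L := size p.
have lastc : nth x0 c L = inr v.
  by rewrite lst (_ : L = (size c).-1) // nth_last.
have oddL : odd L.
  by have := alt L; rewrite lastc /= ltnSn => /(_ isT) /esym /negbFE.
have L3 : (3 <= L)%N.
  rewrite leqNgt; apply/negP => lt3.
  have L1 : L = 1%N by move: oddL lt3; rewrite /L; case: (size p) => [|[|[|l]]].
  have [y py] : exists y, p = [:: y].
    by move: L1; rewrite /L; case: (p) => [|y [|]] // _; exists y.
  move: lastc pth; rewrite /c L1 py /= => -> /andP [H _].
  by move: H; rewrite /= (negbTE uvF).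
pose k := (L - 3)./2.
have Lk : L = (k.*2 + 3)%N.
  rewrite /k; move: oddL L3; clear; move: L => L oL L3.
  have H := odd_double_half (L - 3); rewrite oddB // oL /= add0n in H.
  by rewrite H subnK.
pose s t := match nth x0 c t.*2 with inl i => i | inr _ => u end.
pose r t := match nth x0 c t.*2.+1 with inr j => j | inl _ => v end.
have sz : size c = (k.*2 + 4)%N.
  rewrite /c /= -/L Lk; lia.
have cs : forall t, (t < k.+2)%N -> nth x0 c t.*2 = inl (s t).
  move=> t lt; have := alt t.*2; rewrite sz odd_double /s.
  have lt' : (t.*2 < k.*2 + 4)%N by rewrite -!muln2; lia.
  by case: (nth x0 c t.*2) => // j /(_ lt').
have cr : forall t, (t < k.+2)%N -> nth x0 c t.*2.+1 = inr (r t).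
  move=> t lt; have := alt t.*2.+1; rewrite sz /r /= odd_double.
  have lt' : (t.*2.+1 < k.*2 + 4)%N by rewrite -!muln2; lia.
  by case: (nth x0 p t.*2) => // j /(_ lt').
have /(pathP x0) P := pth.
have szp : size p = (k.*2 + 3)%N by rewrite -/L Lk.
apply: (@mk_cycle _ _ _ k s r).
- move=> t1 t2 l1 l2 e12.
  have H : nth x0 c t1.*2 = nth x0 c t2.*2 by rewrite (cs t1 l1) (cs t2 l2) e12.
  have u1 : (t1.*2 < size c)%N by rewrite sz -!muln2; lia.
  have u2 : (t2.*2 < size c)%N by rewrite sz -!muln2; lia.
  by move/eqP: H; rewrite nth_uniq // => /eqP /double_inj.
- move=> t1 t2 l1 l2 e12.
  have H : nth x0 c t1.*2.+1 = nth x0 c t2.*2.+1 by rewrite (cr t1 l1) (cr t2 l2) e12.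
  have u1 : (t1.*2.+1 < size c)%N by rewrite sz -!muln2; lia.
  have u2 : (t2.*2.+1 < size c)%N by rewrite sz -!muln2; lia.
  by move/eqP: H; rewrite nth_uniq // => /eqP [] /double_inj.
- move=> t lt; have := P t.*2; rewrite szp -muln2 => /(_ ltac:(lia)).
  rewrite muln2 (cs t lt) (_ : nth x0 p t.*2 = nth x0 c t.*2.+1) // (cr t lt) /=.
  exact: FE.
- move=> t lt; have := P t.*2.+1; rewrite szp -muln2 => /(_ ltac:(lia)).
  rewrite muln2 (cr t (ltn_trans lt (ltnSn _))).
  rewrite (_ : nth x0 p t.*2.+1 = nth x0 c (t.+1).*2) // (cs t.+1 lt) /=.
  exact: FE.
have s0 : s 0%N = u by have := cs 0%N isT.
have rk : r k.+1 = v.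
  have := cr k.+1 (ltnSn _); rewrite (_ : (k.+1).*2.+1 = L) ?lastc; last first.
    by rewrite Lk -!muln2; lia.
  by case.
by rewrite s0 rk.
Qed.

Lemma potentials (R : realFieldType) (rho : 'I_n -> 'I_m -> R) :
  (forall i j, E i j -> 0 < rho i j) -> no_cycle E ->
  exists phi : ('I_n + 'I_m)%type -> R, (forall x, 0 < phi x) /\
    (forall i j, E i j -> phi (inl i) = rho i j * phi (inr j)).
Proof.
move=> rpos nc.
suff H : forall N (F : {set 'I_n * 'I_m}), #|F| = N -> (forall i j, (i, j) \in F -> E i j) ->
  exists phi : ('I_n + 'I_m)%type -> R, (forall x, 0 < phi x) /\
    (forall i j, (i, j) \in F -> phi (inl i) = rho i j * phi (inr j)).
  have [phi [H1 H2]] := H _ [set p | E p.1 p.2] erefl (fun i j => ltac:(by rewrite inE)).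
  by exists phi; split => // i j Eij; apply: H2; rewrite inE.
elim=> [|N IH] F cF FE.
  exists (fun=> 1); split => // i j; move/eqP: cF; rewrite cards_eq0 => /eqP ->.
  by rewrite inE.
have : (0 < #|F|)%N by rewrite cF.
rewrite card_gt0 => /set0Pn [[u v] uvF].
pose F' := F :\ (u, v).
have cF' : #|F'| = N by move: cF; rewrite (cardsD1 (u, v)) uvF add1n => -[].
have FE' : forall i j, (i, j) \in F' -> E i j by move=> i j; rewrite inE => /andP [_ /FE].
have [phi [ppos pF]] := IH F' cF' FE'.
have nuv : (u, v) \notin F' by rewrite !inE eqxx.
have ncon : ~~ connect (adj F') (inl u) (inr v).
  apply/negP => con; exact: (cycle_of_connect FE' (FE _ _ uvF) nuv con).
have csym := sym_connect_sym (@adj_sym F').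
pose c := phi (inl u) / (rho u v * phi (inr v)).
have cpos : 0 < c by rewrite divr_gt0 ?mulr_gt0 ?rpos ?FE.
exists (fun x => phi x * (if connect (adj F') (inr v) x then c else 1)); split.
  by move=> x; case: ifP => _; rewrite mulr_gt0.
move=> i j ijF.
case: (eqVneq (i, j) (u, v)) => [[-> ->]|ne].
  rewrite connect0 csym (negbTE ncon) mulr1 /c.
  have := ppos (inl u); have := ppos (inr v); have := rpos _ _ (FE _ _ uvF).
  move=> h1 h2 h3; field.
  by rewrite ?gt_eqF ?lt0r_neq0 ?mulf_neq0 ?lt0r_neq0.
have ijF' : (i, j) \in F' by rewrite !inE ne.
rewrite (pF i j ijF') -mulrA; congr (_ * (_ * _)).
have -> : connect (adj F') (inr v) (inl i) = connect (adj F') (inr v) (inr j); last by [].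
apply/idP/idP => Hc.
  by apply: (connect_trans Hc); apply: connect1.
by apply: (connect_trans Hc); apply: connect1; rewrite adj_sym.
Qed.
End Graph.


Lemma scaling (R : rcfType) n m (E : 'I_n -> 'I_m -> bool) (A : 'M[R]_(n,m)) (B : 'M[R]_(m,n)) :
  no_cycle E -> (forall i j, E i j -> 0 < A i j * B j i) ->
  (forall i j, ~~ E i j -> A i j = 0 /\ B j i = 0) ->
  exists d : 'I_n -> R, exists X : 'M[R]_(n,m), (forall i, d i != 0) /\
    forall i k, (A *m B) i k = d i * (X *m X^T) i k / d k.
Proof.
move=> nc Epos Ezero.
have nz : forall i j, E i j -> A i j != 0 /\ B j i != 0.
  move=> i j /Epos H; split; apply/negP => /eqP H0; move: H; rewrite H0 ?mul0r ?mulr0 ltxx.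
  by []. by [].
pose rho i j := A i j / B j i.
have rpos : forall i j, E i j -> 0 < rho i j.
  move=> i j Eij; have [a0 b0] := nz i j Eij.
  have -> : rho i j = (A i j * B j i) / (B j i ^+ 2) by rewrite /rho; field.
  by rewrite divr_gt0 ?Epos // lt_def sqr_ge0 andbT expf_neq0.
have [phi [ppos pE]] := potentials rpos nc.
pose d i := Num.sqrt (phi (inl i)).
pose f j := Num.sqrt (phi (inr j)).
have dpos : forall i, 0 < d i by move=> i; rewrite sqrtr_gt0.
have fpos : forall j, 0 < f j by move=> j; rewrite sqrtr_gt0.
have dd : forall i, d i * d i = phi (inl i) by move=> i; rewrite -expr2 sqr_sqrtr // ltW.
have ff : forall j, f j * f j = phi (inr j) by move=> j; rewrite -expr2 sqr_sqrtr // ltW.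
exists d, (\matrix_(i, j) (A i j * f j / d i)); split.
  by move=> i; rewrite gt_eqF.
move=> i k; rewrite !mxE big_distrr big_distrl /=; apply: eq_bigr => j _.
rewrite !mxE.
have di := dpos i; have dk := dpos k; have fj := fpos j.
have -> : d i * (A i j * f j / d i * (A k j * f j / d k)) / d k =
          A i j * (A k j * (f j * f j) / (d k * d k)).
  field; by rewrite !gt_eqF.
rewrite dd ff.
case Ekj: (E k j); last first.
  by have [-> ->] := Ezero k j (negbT Ekj); rewrite !mul0r mulr0.
rewrite (pE k j Ekj) /rho.
have [a0 b0] := nz k j Ekj.
have hj := ppos (inr j).
congr (_ * _); field.
by rewrite a0 b0 gt_eqF.
Qed.

Lemma perturb_pos (R : realFieldType) (c x e : R) : c != 0 -> 0 < e ->
  (Num.sg x = 0 \/ Num.sg x = Num.sg c) -> 0 < (x + e * Num.sg c) * Num.sg c.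
Proof.
move=> c0 e0 hx.
have [cn|cp] := ltP c 0; last first.
  have cp' : 0 < c by rewrite lt_def c0 cp.
  rewrite gtr0_sg // mulr1 mulr1.
  have : 0 <= x.
    case: hx => [/eqP|]; first by rewrite sgr_eq0 => /eqP ->.
    by rewrite (gtr0_sg cp') => H; rewrite -sgr_ge0 H ler01.
  move=> x0; lra.
rewrite ltr0_sg // mulrN1 mulrN1.
have : x <= 0.
  case: hx => [/eqP|]; first by rewrite sgr_eq0 => /eqP ->.
  by rewrite (ltr0_sg cn) => H; rewrite -sgr_le0 H lerN10.
move=> x0; lra.
Qed.

Lemma perturb_prod (R : realFieldType) (c a b e : R) : c != 0 -> 0 < e ->
  (Num.sg a = 0 \/ Num.sg a = Num.sg c) -> (Num.sg b = 0 \/ Num.sg b = Num.sg c) ->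
  0 < (a + e * Num.sg c) * (b + e * Num.sg c).
Proof.
move=> c0 e0 ha hb.
have := mulr_gt0 (perturb_pos c0 e0 ha) (perturb_pos c0 e0 hb).
by rewrite mulrACA -expr2 sqr_sg c0 mulr1.
Qed.

Lemma poly_bound (T : numFieldType) (p : {poly T}) :
  exists K : T, 0 <= K /\ forall x, `|x| <= 1 -> `|p.[x] - p.[0]| <= `|x| * K.
Proof.
elim/poly_ind: p => [|q c [K [K0 HK]]].
  by exists 0; split => // x _; rewrite !horner0 subrr normr0 mulr0.
exists (K + `|q.[0]|); split; first by rewrite addr_ge0.
move=> x x1; rewrite !hornerMXaddC mulr0 add0r addrK normrM mulrC.
rewrite ler_wpM2l ?normr_ge0 //.
rewrite -[q.[x]](subrK q.[0]) (le_trans (ler_normD _ _)) // lerD2r.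
apply: (le_trans (HK x x1)); rewrite ler_piMl //.
Qed.

Lemma small_e (R : realFieldType) (del K : R) : 0 < del -> 0 <= K ->
  exists e, [/\ 0 < e, e <= 1 & e * K < del].
Proof.
move=> d0 K0; exists (del / (del + K + 1)).
have h : 0 < del + K + 1 by lra.
split.
- by rewrite divr_gt0.
- by rewrite ler_pdivrMr // mul1r; lra.
- rewrite mulrAC ltr_pdivrMr //; nra.
Qed.

Lemma poly_lim_ge0 (R : realFieldType) (p : {poly R}) :
  (forall e, 0 < e -> e <= 1 -> 0 <= p.[e]) -> 0 <= p.[0].
Proof.
move=> H; rewrite leNgt; apply/negP => p0.
have [K [K0 HK]] := poly_bound p.
have d0 : 0 < - p.[0] by rewrite oppr_gt0.
have [e [e0 e1 eK]] := small_e d0 K0.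
have hb := HK e; rewrite (ger0_norm (ltW e0)) in hb; have {}hb := hb e1.
have he := H e e0 e1.
have := ler_norm (p.[e] - p.[0]).
nra.
Qed.


Section Main.
Variables (R : rcfType) (n m : nat) (C : 'M[R]_(n, m)).
Variables (A : 'M[R]_(n, m)) (B : 'M[R]_(m, n)).
Hypothesis acyc : dsr_acyclic C C^T.
Hypothesis hA : in_Q0 C A.
Hypothesis hB : in_Q0 C^T B.

Definition Ae (e : R) : 'M[R]_(n, m) := \matrix_(i, j) (A i j + e * Num.sg (C i j)).
Definition Be (e : R) : 'M[R]_(m, n) := \matrix_(j, i) (B j i + e * Num.sg (C i j)).

Lemma Ae0 : Ae 0 = A. Proof. by apply/matrixP => i j; rewrite mxE mul0r addr0. Qed.
Lemma Be0 : Be 0 = B. Proof. by apply/matrixP => i j; rewrite mxE mul0r addr0. Qed.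

Lemma nocyc : no_cycle (fun i j => C i j != 0).
Proof.
move=> [k [s [r [si ri H]]]]; apply: acyc; right.
exists k, s, r; split => // t; have [H1 H2] := H t; split => //.
by rewrite mxE.
Qed.

Lemma sim_e e : 0 < e -> exists d : 'I_n -> R, exists X : 'M[R]_(n, m),
  (forall i, d i != 0) /\ forall i k, (Ae e *m Be e) i k = d i * (X *m X^T) i k / d k.
Proof.
move=> e0; apply: (scaling nocyc).
  move=> i j Cij; rewrite !mxE; apply: perturb_prod => //.
  by have := hB j i; rewrite mxE.
move=> i j; rewrite negbK => /eqP C0; rewrite !mxE C0 sgr0 mulr0 !addr0.
have hAij := hA i j; have hBji := hB j i; rewrite C0 sgr0 in hAij.
rewrite mxE C0 sgr0 in hBji.
have a0 : A i j = 0 by apply/eqP; rewrite -sgr_eq0; case: hAij => ->.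
have b0 : B j i = 0 by apply/eqP; rewrite -sgr_eq0; case: hBji => ->.
by rewrite a0 b0.
Qed.


Definition PA : 'M[{poly R}]_(n, m) :=
  \matrix_(i, j) ((A i j)%:P + 'X * (Num.sg (C i j))%:P).
Definition PB : 'M[{poly R}]_(m, n) :=
  \matrix_(j, i) ((B j i)%:P + 'X * (Num.sg (C i j))%:P).

Lemma PA_eval e : map_mx (horner_eval e) PA = Ae e.
Proof. by apply/matrixP => i j; rewrite !mxE horner_evalE !hornerE. Qed.
Lemma PB_eval e : map_mx (horner_eval e) PB = Be e.
Proof. by apply/matrixP => i j; rewrite !mxE horner_evalE !hornerE. Qed.

Lemma P0_part : P0_matrix (A *m B) /\ P0_matrix (compound2 (A *m B)).
Proof.
split => S.
  have ev : forall e, (\det (principal_submx (PA *m PB) S)).[e] =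
      \det (principal_submx (Ae e *m Be e) S).
    move=> e; rewrite -horner_evalE -det_map_mx -principal_submx_map map_mxM.
    by rewrite PA_eval PB_eval.
  rewrite -Ae0 -Be0 -ev; apply: poly_lim_ge0 => e e0 _; rewrite ev.
  have [d [X [dn0 HM]]] := sim_e e0.
  by case: (simgram_P0 dn0 HM) => + _; apply.
have ev : forall e, (\det (principal_submx (compound2 (PA *m PB)) S)).[e] =
    \det (principal_submx (compound2 (Ae e *m Be e)) S).
  move=> e; rewrite -horner_evalE -det_map_mx -principal_submx_map -compound2_map map_mxM.
  by rewrite PA_eval PB_eval.
rewrite -Ae0 -Be0 -ev; apply: poly_lim_ge0 => e e0 _; rewrite ev.
have [d [X [dn0 HM]]] := sim_e e0.
by case: (simgram_P0 dn0 HM) => _; apply.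
Qed.


Lemma semistable_part : positive_semistable (A *m B).
Proof.
move=> z rz; rewrite leNgt; apply/negP => zn.
pose rc := real_complex R.
pose HA : 'M[{poly R[i]}]_(n, m) :=
  \matrix_(i, j) ((rc (A i j))%:P + 'X * (rc (Num.sg (C i j)))%:P).
pose HB : 'M[{poly R[i]}]_(m, n) :=
  \matrix_(j, i) ((rc (B j i))%:P + 'X * (rc (Num.sg (C i j)))%:P).
pose H := \det ((z%:P)%:M - HA *m HB).
have ev : forall e : R, H.[rc e] = \det (z%:M - map_mx rc (Ae e *m Be e)).
  move=> e; rewrite -horner_evalE -det_map_mx map_mxB map_scalar_mx map_mxM /=.
  rewrite horner_evalE hornerC map_mxM; congr (\det (_ - _ *m _)).
    by apply/matrixP => i j; rewrite !mxE horner_evalE !hornerE rmorphD rmorphM.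
  by apply/matrixP => i j; rewrite !mxE horner_evalE !hornerE rmorphD rmorphM.
have H0 : H.[0] = 0.
  have := ev 0; rewrite /rc rmorph0 Ae0 Be0 => ->.
  by rewrite -horner_char -map_char_poly; apply/eqP.
have [K [K0 HK]] := poly_bound H.
have KE : K = rc (complex.Re K).
  by move: (ger0_Im K0); clear; case: K => a b /= ->.
have Kr0 : 0 <= complex.Re K by move: K0; rewrite KE /rc ler0c.
have dn : 0 < (- complex.Re z) ^+ n by rewrite exprn_gt0 // oppr_gt0.
have [e [e0 e1 eK]] := small_e dn Kr0.
have [d [X [dn0 HM]]] := sim_e e0.
have low := det_lower (simgram_semistable dn0 HM) zn.
rewrite -ev in low.
have ee : `|rc e| = rc e by rewrite ger0_norm // /rc ler0c ltW.
have up := HK (rc e); rewrite ee H0 subr0 in up.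
have {up} up := up (ltac:(by rewrite /rc lecR)).
have := le_trans low up; rewrite KE -rmorphM /rc lecR => bad.
by move: eK; rewrite ltNge bad.
Qed.

End Main.

Theorem main_thm (R : rcfType) (n m : nat) (C : 'M[R]_(n, m)) :
  (2 <= n)%N ->
  dsr_acyclic C C^T ->
  forall (A : 'M[R]_(n, m)) (B : 'M[R]_(m, n)),
    in_Q0 C A -> in_Q0 C^T B ->
    [/\ P0_matrix (A *m B), P0_matrix (compound2 (A *m B))
      & positive_semistable (A *m B)].
Proof.
move=> _ acyc A B hA hB.
have [h1 h2] := P0_part acyc hA hB.
by split => //; exact: (semistable_part acyc hA hB).
Qed.

End Aux.

Theorem theorem6p3 (R : rcfType) (n m : nat) (C : 'M[R]_(n, m)) :
  (2 <= n)%N ->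
  dsr_acyclic C C^T ->
  forall (A : 'M[R]_(n, m)) (B : 'M[R]_(m, n)),
    in_Q0 C A -> in_Q0 C^T B ->
    [/\ P0_matrix (A *m B), P0_matrix (compound2 (A *m B))
      & positive_semistable (A *m B)].
Proof. exact: Aux.main_thm. Qed.
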